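(* Let $(\mathbf{P}_t)_{t\ge0}$ be a continuous-time Markov process on a countable state space $\mathcal{S}$ with stable conservative $Q$-matrix $Q=(q_{ij})$ satisfying $\sup_{i\in\mathcal{S}}q_i<\infty$. Then for every $t\ge0$, $$\inf_{i\ne j}\|\mathbf{p}^i(t)-\mathbf{p}^j(t)\|_{\mathrm{TV}}\ge\exp(-t\|Q\|)>0,$$ where $\|Q\|=\sup_i\sum_j|q_{ij}|=\sup_i2q_i$. In particular the process is initial-state identifiable.
   Context: $\mathbf{P}_t=(p_{ij}(t))$ is the transition matrix, $\mathbf{p}^i(t)$ its $i$-th row, $q_{ij}=p'_{ij}(0)\ge0$ for $i\ne j$, $q_i=-q_{ii}=\sum_{j\ne i}q_{ij}$. $\|\mu_1-\mu_2\|_{\mathrm{TV}}=\frac12\sum_\sigma|\mu_1(\sigma)-\mu_2(\sigma)|$. Initial-state identifiability: for every $t\in[0,\infty)$ all rows of $\mathbf{P}_t$ are distinct. *)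

(* Defs.v *)
From Stdlib Require Import Reals Lra.
Open Scope R_scope.

(* A countable state space is modelled as a decidable subset S of nat:
   the states are the n with S n = true. *)

Definition ssum (S : nat -> bool) (f : nat -> R) (l : R) : Prop :=
  infinite_sum (fun n => if S n then f n else 0) l.

Definition kron (i j : nat) : R := if Nat.eqb i j then 1 else 0.

Definition transition_function (S : nat -> bool) (P : R -> nat -> nat -> R) : Prop :=
  (forall t i j, 0 <= t -> S i = true -> S j = true -> 0 <= P t i j) /\
  (forall t i, 0 <= t -> S i = true -> ssum S (P t i) 1) /\
  (forall i j, S i = true -> S j = true -> P 0 i j = kron i j) /\
  (forall s t i j, 0 <= s -> 0 <= t -> S i = true -> S j = true ->
     ssum S (fun k => P s i k * P t k j) (P (s + t) i j)).

Definition has_Q_matrix (S : nat -> bool) (P : R -> nat -> nat -> R)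
  (Q : nat -> nat -> R) : Prop :=
  forall i j, S i = true -> S j = true ->
    limit1_in (fun h => (P h i j - kron i j) / h) (fun h => 0 < h) (Q i j) 0.

Definition qdiag (Q : nat -> nat -> R) (i : nat) : R := - Q i i.

(* conservative: q_i = sum_{j <> i} q_ij (stability is automatic: q_i is real) *)
Definition conservative (S : nat -> bool) (Q : nat -> nat -> R) : Prop :=
  forall i, S i = true ->
    ssum S (fun j => if Nat.eqb j i then 0 else Q i j) (qdiag Q i).

(* ||mu1 - mu2||_TV = (1/2) sum |mu1 - mu2| ; rows i, j of P_t *)
Definition tv_rows (S : nat -> bool) (P : R -> nat -> nat -> R)
  (t : R) (i j : nat) (d : R) : Prop :=
  ssum S (fun k => Rabs (P t i k - P t j k)) (2 * d).

Definition is_normQ (S : nat -> bool) (Q : nat -> nat -> R) (N : R) : Prop :=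
  is_lub (fun x => exists i, S i = true /\ ssum S (fun j => Rabs (Q i j)) x) N.

Definition initial_state_identifiable (S : nat -> bool) (P : R -> nat -> nat -> R) : Prop :=
  forall t i j, 0 <= t -> S i = true -> S j = true -> i <> j ->
    exists k, S k = true /\ P t i k <> P t j k.

(* Main.v *)
Require Import Defs.
From Stdlib Require Import Reals Lra Lia ClassicalEpsilon Classical.
Open Scope R_scope.

Lemma exp_pow_n n x : exp (INR n * x) = exp x ^ n.
Proof.
  induction n as [|n IH].
  - simpl; rewrite Rmult_0_l, exp_0; reflexivity.
  - cbn [pow]; rewrite S_INR, Rmult_plus_distr_r, Rmult_1_l, exp_plus, IH; ring.
Qed.

Lemma bernoulli x n : 0 <= x <= 1 -> 1 - INR n * x <= (1 - x)^n.
Proof.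
  intros Hx; induction n as [|n IH].
  - simpl; lra.
  - cbn [pow]; rewrite S_INR. set (y := (1-x)^n) in *. pose proof (pos_INR n). nra.
Qed.

Lemma stepB n a : (0 < INR n) -> 0 <= a <= INR n ->
  exp (- a) * (1 - a^2 / INR n) <= (1 - a / INR n)^n.
Proof.
  intros Hn Ha. set (x := a / INR n).
  assert (Hx : 0 <= x <= 1).
  { unfold x; split. apply Rmult_le_pos; [lra| left; apply Rinv_0_lt_compat; lra].
    apply (Rmult_le_reg_r (INR n)); [lra|]. unfold Rdiv. rewrite Rmult_assoc, Rinv_l; lra. }
  assert (Ha' : a = INR n * x) by (unfold x; field; lra).
  assert (E : exp a = exp x ^ n) by (rewrite Ha'; apply exp_pow_n).
  assert (H1 : 1 - INR n * (x*x) <= (1 - x*x)^n) by (apply bernoulli; nra).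
  assert (H2 : (1 - x*x)^n <= ((1-x) * exp x)^n).
  { apply pow_incr. split. nra. pose proof (exp_ineq1_le x). nra. }
  rewrite Rpow_mult_distr, <- E in H2.
  assert (H3 : a^2 / INR n = INR n * (x*x)) by (rewrite Ha'; field; lra).
  rewrite H3.
  assert (exp (-a) * exp a = 1) by (rewrite <- exp_plus; replace (-a+a) with 0 by ring; apply exp_0).
  pose proof (exp_pos (-a)). fold x.
  assert (H5 : exp (-a) * (1 - INR n * (x*x)) <= exp (-a) * ((1-x)^n * exp a)) by (apply Rmult_le_compat_l; lra).
  replace (exp (-a) * ((1-x)^n * exp a)) with ((1-x)^n * (exp (-a) * exp a)) in H5 by ring.
  rewrite H, Rmult_1_r in H5. exact H5.
Qed.

Section Disc.
Variables (F G : R -> R) (F0 c : R).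
Hypothesis Hc : 0 <= c.
Hypothesis HF0 : 0 <= F0.
Hypothesis HF00 : F0 <= F 0.
Hypothesis Hmul : forall s h, 0 <= s -> 0 < h -> F s * G h <= F (s + h).
Hypothesis Hder : forall eps, 0 < eps -> exists delta, 0 < delta /\
   forall h, 0 < h < delta -> 1 - (c+eps)*h <= G h.

Lemma iterA h g : 0 < h -> 0 <= g -> g <= G h -> forall m, F0 * g^m <= F (INR m * h).
Proof.
  intros Hh Hg HgG m; induction m as [|m IH].
  - simpl; rewrite Rmult_0_l; lra.
  - rewrite S_INR, Rmult_plus_distr_r, Rmult_1_l.
    assert (0 <= INR m * h) by (apply Rmult_le_pos; [apply pos_INR|lra]).
    pose proof (Hmul (INR m * h) h H Hh).
    assert (0 <= F0 * g^m) by (apply Rmult_le_pos; [lra| apply pow_le; lra]).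
    cbn [pow]. nra.
Qed.

Lemma claimC t : 0 < t -> forall e, 0 < e -> forall eta, 0 < eta ->
  F0 * exp (-((c+e)*t)) - eta <= F t.
Proof.
  intros Ht e He eta Heta.
  destruct (Hder e He) as [delta [Hd HG]].
  set (a := (c+e)*t).
  assert (Ha : 0 < a) by (unfold a; nra).
  set (K := F0 * exp (-a) * a^2).
  assert (HK : 0 <= K) by (unfold K; pose proof (exp_pos (-a)); apply Rmult_le_pos; [nra| apply pow_le; lra]).
  set (m := Rmin (delta / t) (Rmin (1/a) (eta / (K + 1)))).
  assert (Hm : 0 < m).
  { unfold m. repeat apply Rmin_pos; apply Rdiv_lt_0_compat; lra. }
  destruct (archimed_cor1 m Hm) as [n [Hn Hn0]].
  assert (HnR : 0 < INR n) by (apply lt_0_INR; exact Hn0).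
  assert (Hm1 : m <= delta / t) by (unfold m; apply Rmin_l).
  assert (Hm2 : m <= 1/a) by (unfold m; eapply Rle_trans; [apply Rmin_r| apply Rmin_l]).
  assert (Hm3 : m <= eta/(K+1)) by (unfold m; eapply Rle_trans; [apply Rmin_r| apply Rmin_r]).
  set (h := t / INR n).
  assert (Hinv : 0 < / INR n) by (apply Rinv_0_lt_compat; lra).
  assert (Hh : 0 < h) by (unfold h; apply Rdiv_lt_0_compat; lra).
  assert (Hhd : h < delta).
  { unfold h, Rdiv. assert (t * / INR n < t * (delta / t)) by (apply Rmult_lt_compat_l; lra).
    replace (t * (delta/t)) with delta in H by (field; lra). exact H. }
  assert (Han : a * / INR n < 1).
  { assert (a * / INR n < a * (1/a)) by (apply Rmult_lt_compat_l; lra).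
    replace (a * (1/a)) with 1 in H by (field; lra). exact H. }
  assert (Hg : 1 - (c+e)*h = 1 - a / INR n) by (unfold h, a; field; lra).
  assert (HGh := HG h (conj Hh Hhd)). rewrite Hg in HGh.
  assert (Hg0 : 0 <= 1 - a / INR n) by (unfold Rdiv; lra).
  pose proof (iterA h _ Hh Hg0 HGh n) as HA.
  replace (INR n * h) with t in HA by (unfold h; field; lra).
  assert (HaN : 0 <= a <= INR n).
  { split; [lra|]. apply (Rmult_le_reg_r (/ INR n)); [lra|]. rewrite Rinv_r; lra. }
  pose proof (stepB n a HnR HaN) as HB.
  assert (HKn : K * / INR n <= eta).
  { assert (K * / INR n <= K * (eta / (K+1))) by (apply Rmult_le_compat_l; lra).
    assert (K * (eta/(K+1)) <= eta).
    { apply (Rmult_le_reg_r (K+1)); [lra|]. unfold Rdiv. rewrite (Rmult_assoc K), Rmult_assoc, Rinv_l; nra. }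
    lra. }
  assert (F0 * (exp (-a) * (1 - a^2 / INR n)) <= F0 * (1 - a / INR n)^n)
    by (apply Rmult_le_compat_l; lra).
  unfold K in HKn. unfold Rdiv in *. fold a. nra.
Qed.

Lemma disc : forall t, 0 <= t -> F0 * exp (- c * t) <= F t.
Proof.
  intros t Ht. destruct Ht as [Ht|Ht].
  2:{ subst t. replace (-c*0) with 0 by ring. rewrite exp_0. lra. }
  set (K := F0 * exp (- c * t)).
  assert (HK : 0 <= K) by (unfold K; pose proof (exp_pos (-c*t)); nra).
  assert (D : forall eta, 0 < eta -> K - eta <= F t).
  { intros eta Heta.
    set (e := eta / (2 * (K*t+1))).
    assert (He : 0 < e) by (unfold e; apply Rdiv_lt_0_compat; nra).
    pose proof (claimC t Ht e He (eta/2) ltac:(lra)) as HC.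
    assert (E : exp (-((c+e)*t)) = exp (-c*t) * exp (-(e*t))).
    { rewrite <- exp_plus. f_equal. ring. }
    pose proof (exp_ineq1_le (-(e*t))).
    assert (Ke : K * (e * t) <= eta/2).
    { unfold e. apply (Rmult_le_reg_r (2*(K*t+1))); [nra|].
      replace (K * (eta / (2 * (K * t + 1)) * t) * (2 * (K * t + 1))) with (K*t*eta) by (field; nra).
      nra. }
    rewrite E in HC. unfold K in *. pose proof (exp_pos (-c*t)).
    assert (F0 * exp (-c*t) * (1 + - (e*t)) <= F0 * exp (-c*t) * exp (-(e*t))) by (apply Rmult_le_compat_l; nra).
    nra. }
  destruct (Rle_or_lt K (F t)) as [H|H]; [exact H|].
  specialize (D ((K - F t)/2) ltac:(lra)). lra.
Qed.
End Disc.


Lemma cv_ext (u v : nat -> R) l : (forall n, u n = v n) -> Un_cv u l -> Un_cv v l.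
Proof. intros E H eps He. destruct (H eps He) as [N HN]. exists N. intros n Hn. rewrite <- E. auto. Qed.

Lemma cv_const c : Un_cv (fun _ => c) c.
Proof. intros eps He. exists 0%nat. intros. unfold Rdist. rewrite Rminus_diag, Rabs_R0. lra. Qed.

Lemma is_ext u v l : (forall n, u n = v n) -> infinite_sum u l -> infinite_sum v l.
Proof. intros E H. apply (cv_ext (sum_f_R0 u)); [|exact H]. intros n. apply sum_eq. intros; auto. Qed.

Lemma is_plus u v a b : infinite_sum u a -> infinite_sum v b -> infinite_sum (fun n => u n + v n) (a+b).
Proof. intros Hu Hv. apply (cv_ext (fun n => sum_f_R0 u n + sum_f_R0 v n)).
  intros; rewrite plus_sum; reflexivity. apply CV_plus; assumption. Qed.

Lemma is_minus u v a b : infinite_sum u a -> infinite_sum v b -> infinite_sum (fun n => u n - v n) (a-b).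
Proof. intros Hu Hv. apply (cv_ext (fun n => sum_f_R0 u n - sum_f_R0 v n)).
  intros; rewrite minus_sum; reflexivity. apply CV_minus; assumption. Qed.

Lemma is_scal u a c : infinite_sum u a -> infinite_sum (fun n => c * u n) (c * a).
Proof. intros Hu. apply (cv_ext (fun n => c * sum_f_R0 u n)).
  intros; rewrite scal_sum; apply sum_eq; intros; ring.
  apply (CV_mult (fun _ => c)); [apply cv_const| assumption]. Qed.

Lemma is_le u v a b : (forall n, u n <= v n) -> infinite_sum u a -> infinite_sum v b -> a <= b.
Proof. intros H Hu Hv. apply (Rle_cv_lim (Un := sum_f_R0 u) (Vn := sum_f_R0 v)); auto.
  intros n; apply sum_Rle; auto. Qed.

Lemma partial_le u a n : (forall k, 0 <= u k) -> infinite_sum u a -> sum_f_R0 u n <= a.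
Proof. intros H Hu. apply sum_incr; auto. Qed.

Lemma is_nonneg u a : (forall k, 0 <= u k) -> infinite_sum u a -> 0 <= a.
Proof. intros H Hu. eapply Rle_trans; [|apply (partial_le u a 0); auto]. simpl; auto. Qed.

Lemma sum_single k a n : sum_f_R0 (fun m => if Nat.eqb m k then a else 0) n = if Nat.leb k n then a else 0.
Proof.
  induction n as [|n IH].
  - simpl. destruct k; simpl; reflexivity.
  - change (sum_f_R0 (fun m => if Nat.eqb m k then a else 0) (S n)) with
      (sum_f_R0 (fun m => if Nat.eqb m k then a else 0) n + (if Nat.eqb (S n) k then a else 0)).
    rewrite IH. destruct (Nat.eqb (S n) k) eqn:E1.
    + apply Nat.eqb_eq in E1. subst k. rewrite (proj2 (Nat.leb_gt (S n) n)) by lia.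
      rewrite Nat.leb_refl. ring.
    + apply Nat.eqb_neq in E1. destruct (Nat.leb k n) eqn:E2.
      * apply Nat.leb_le in E2. rewrite (proj2 (Nat.leb_le k (S n))) by lia. ring.
      * apply Nat.leb_gt in E2. rewrite (proj2 (Nat.leb_gt k (S n))) by lia. ring.
Qed.

Lemma is_single k a : infinite_sum (fun m => if Nat.eqb m k then a else 0) a.
Proof.
  intros eps He. exists k. intros n Hn. rewrite sum_single.
  rewrite (proj2 (Nat.leb_le k n)) by lia. unfold Rdist. rewrite Rminus_diag, Rabs_R0. lra.
Qed.

Lemma is_zero : infinite_sum (fun _ => 0) 0.
Proof. apply (is_ext (fun m => if Nat.eqb m 0 then 0 else 0)). intros; destruct (Nat.eqb n 0); auto. apply is_single. Qed.

Lemma is_abs u a b : infinite_sum u a -> infinite_sum (fun n => Rabs (u n)) b -> Rabs a <= b.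
Proof.
  intros Hu Hb. apply Rabs_le. split.
  - assert (Hn := is_scal _ _ (-1) Hb).
    replace (-b) with (-1 * b) by ring. eapply is_le; [|exact Hn|exact Hu].
    intros n; simpl. pose proof (Rle_abs (- u n)). rewrite Rabs_Ropp in H. lra.
  - eapply is_le; [|exact Hu|exact Hb]. intros; apply Rle_abs.
Qed.

Lemma is_exists_comp u v b : (forall n, 0 <= u n <= v n) -> infinite_sum v b -> exists a, infinite_sum u a.
Proof.
  intros H Hv. destruct (Rseries_CV_comp u v H (exist _ b Hv)) as [a Ha]. exists a. exact Ha.
Qed.

Lemma is_finsum (a : nat -> nat -> R) (l : nat -> R) n :
  (forall k, (k <= n)%nat -> infinite_sum (a k) (l k)) ->
  infinite_sum (fun m => sum_f_R0 (fun k => a k m) n) (sum_f_R0 l n).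
Proof.
  induction n as [|n IH]; intros H.
  - simpl. apply H; lia.
  - simpl. apply is_plus. apply IH; intros; apply H; lia. apply H; lia.
Qed.

Definition lim_series (u : nat -> R) : R := epsilon (inhabits 0) (fun l => infinite_sum u l).

Lemma lim_series_spec u : (exists l, infinite_sum u l) -> infinite_sum u (lim_series u).
Proof. intros H. unfold lim_series. apply (epsilon_spec (inhabits 0) (fun l => infinite_sum u l) H). Qed.


Lemma term_le u a k : (forall n, 0 <= u n) -> infinite_sum u a -> u k <= a.
Proof.
  intros H Hu. eapply Rle_trans; [|apply (partial_le u a k H Hu)].
  destruct k; simpl; [lra|]. pose proof (cond_pos_sum u k H). lra.
Qed.

Section Main.
Variables (S : nat -> bool) (P : R -> nat -> nat -> R) (Q : nat -> nat -> R) (N : R).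
Hypothesis HT : transition_function S P.
Hypothesis HQ : has_Q_matrix S P Q.
Hypothesis HC : conservative S Q.
Hypothesis HN : is_normQ S Q N.

Lemma Pnn : forall t i j, 0 <= t -> S i = true -> S j = true -> 0 <= P t i j.
Proof. destruct HT as [H _]; exact H. Qed.
Lemma Prow : forall t i, 0 <= t -> S i = true -> ssum S (P t i) 1.
Proof. destruct HT as [_ [H _]]; exact H. Qed.
Lemma P0 : forall i j, S i = true -> S j = true -> P 0 i j = kron i j.
Proof. destruct HT as [_ [_ [H _]]]; exact H. Qed.
Lemma PCK : forall s t i j, 0 <= s -> 0 <= t -> S i = true -> S j = true ->
     ssum S (fun k => P s i k * P t k j) (P (s + t) i j).
Proof. destruct HT as [_ [_ [_ H]]]; exact H. Qed.

Lemma limQ i j : S i = true -> S j = true -> forall eps, 0 < eps -> exists alp, 0 < alp /\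
  forall h, 0 < h < alp -> Rabs ((P h i j - kron i j) / h - Q i j) < eps.
Proof.
  intros Si Sj eps He. destruct (HQ i j Si Sj eps He) as [alp [Ha H]].
  exists alp; split; [lra|]. intros h Hh. apply (H h). split; [lra|].
  simpl. unfold Rdist. rewrite Rminus_0_r, Rabs_pos_eq; lra.
Qed.

Lemma Qoff i j : S i = true -> S j = true -> i <> j -> 0 <= Q i j.
Proof.
  intros Si Sj Hij. destruct (Rle_or_lt 0 (Q i j)) as [H|H]; [exact H|].
  destruct (limQ i j Si Sj (- Q i j / 2) ltac:(lra)) as [alp [Ha Hl]].
  specialize (Hl (alp/2) ltac:(lra)).
  unfold kron in Hl. rewrite (proj2 (Nat.eqb_neq i j) Hij), Rminus_0_r in Hl.
  assert (0 <= P (alp/2) i j / (alp/2)).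
  { unfold Rdiv; apply Rmult_le_pos; [apply Pnn; auto; lra| left; apply Rinv_0_lt_compat; lra]. }
  apply Rabs_def2 in Hl. lra.
Qed.

Lemma qdiag_nonneg k : S k = true -> 0 <= qdiag Q k.
Proof.
  intros Sk. apply (is_nonneg _ _ ) with (2 := HC k Sk).
  intros n. destruct (S n) eqn:Sn; [|lra]. destruct (Nat.eqb n k) eqn:E; [lra|].
  apply Qoff; auto. apply Nat.eqb_neq in E. auto.
Qed.

Lemma qdiag_le k : S k = true -> 0 <= N /\ 2 * qdiag Q k <= N.
Proof.
  intros Sk.
  assert (Hs : ssum S (fun j => Rabs (Q k j)) (qdiag Q k + Rabs (Q k k))).
  { unfold ssum. eapply is_ext; [| apply (is_plus _ _ _ _ (HC k Sk) (is_single k (Rabs (Q k k))))].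
    intros n; simpl. destruct (S n) eqn:Sn; destruct (Nat.eqb n k) eqn:E.
    - apply Nat.eqb_eq in E; subst; ring.
    - rewrite Rplus_0_r. symmetry; apply Rabs_pos_eq. apply Qoff; auto. apply Nat.eqb_neq in E. auto.
    - apply Nat.eqb_eq in E; subst. congruence.
    - ring. }
  destruct HN as [Hub _].
  assert (Hx := Hub _ (ex_intro _ k (conj Sk Hs))).
  pose proof (qdiag_nonneg k Sk). pose proof (Rabs_pos (Q k k)).
  assert (qdiag Q k <= Rabs (Q k k)) by (unfold qdiag; rewrite <- Rabs_Ropp; apply Rle_abs).
  lra.
Qed.

Lemma pkk_lower k : S k = true -> forall t, 0 <= t -> exp (- (N/2) * t) <= P t k k.
Proof.
  intros Sk t Ht. destruct (qdiag_le k Sk) as [HN0 Hq].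
  assert (H := disc (fun s => P s k k) (fun s => P s k k) 1 (N/2) ltac:(lra) ltac:(lra)).
  replace (exp (-(N/2)*t)) with (1 * exp (- (N/2) * t)) by ring. apply H; clear H; auto.
  - rewrite P0 by auto. unfold kron; rewrite Nat.eqb_refl; lra.
  - intros s h Hs Hh. pose proof (PCK s h k k Hs ltac:(lra) Sk Sk) as HK.
    unfold ssum in HK.
    assert (Hnn : forall n, 0 <= (if S n then P s k n * P h n k else 0)).
    { intros n; destruct (S n) eqn:Sn; [|lra]. apply Rmult_le_pos; apply Pnn; auto; lra. }
    pose proof (term_le _ _ k Hnn HK) as T. cbv beta in T.
    rewrite Sk in T. exact T.
  - intros eps He. destruct (limQ k k Sk Sk eps He) as [alp [Ha Hl]].
    exists alp; split; auto. intros h Hh. specialize (Hl h Hh).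
    unfold kron in Hl; rewrite Nat.eqb_refl in Hl. apply Rabs_def2 in Hl. destruct Hl as [_ Hl].
    unfold qdiag in Hq.
    assert ((P h k k - 1) / h > Q k k - eps) by lra.
    assert (P h k k - 1 > (Q k k - eps) * h).
    { apply (Rmult_lt_reg_r (/h)). apply Rinv_0_lt_compat; lra.
      replace ((P h k k - 1) * /h) with ((P h k k - 1)/h) by reflexivity.
      replace ((Q k k - eps) * h * /h) with (Q k k - eps) by (field; lra). lra. }
    nra.
Qed.

Lemma pkk_lower2 k h : S k = true -> 0 <= h -> 1 - P h k k <= N/2 * h.
Proof.
  intros Sk Hh. pose proof (pkk_lower k Sk h Hh). pose proof (exp_ineq1_le (- (N/2) * h)). lra.
Qed.


Section Pair.
Variables (i j : nat).
Hypotheses (Si : S i = true) (Sj : S j = true) (Hij : i <> j).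

Definition absd s k := if S k then Rabs (P s i k - P s j k) else 0.

Lemma absd_nn s k : 0 <= absd s k.
Proof. unfold absd; destruct (S k); [apply Rabs_pos| lra]. Qed.

Lemma absd_conv s : 0 <= s -> exists l, infinite_sum (absd s) l.
Proof.
  intros Hs. apply (is_exists_comp _ (fun k => (if S k then P s i k else 0) + (if S k then P s j k else 0)) (1+1)).
  - intros k; unfold absd; destruct (S k) eqn:Sk; [|lra].
    pose proof (Pnn s i k Hs Si Sk). pose proof (Pnn s j k Hs Sj Sk).
    split; [apply Rabs_pos|]. apply Rabs_le; lra.
  - apply is_plus; apply Prow; auto.
Qed.

Definition Ff s := lim_series (absd s).

Lemma Ff_spec s : 0 <= s -> infinite_sum (absd s) (Ff s).
Proof. intros Hs. apply lim_series_spec, absd_conv, Hs. Qed.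

Section Core.
Variables (s h : R).
Hypotheses (Hs : 0 <= s) (Hh : 0 < h).

Definition nu m := P s i m - P s j m.
Definition W k m := if S m then (if Nat.eqb m k then 0 else Rabs (nu m) * P h m k) else 0.
Definition D k := P (s+h) i k - P (s+h) j k.

Lemma step1 k : S k = true -> exists w, infinite_sum (W k) w /\ Rabs (D k - nu k * P h k k) <= w.
Proof.
  intros Sk.
  pose proof (PCK s h i k Hs ltac:(lra) Si Sk) as CKi.
  pose proof (PCK s h j k Hs ltac:(lra) Sj Sk) as CKj.
  unfold ssum in CKi, CKj.
  pose proof (is_minus _ _ _ _ (is_minus _ _ _ _ CKi CKj) (is_single k (nu k * P h k k))) as B.
  assert (B' : infinite_sum (fun m => if S m then (if Nat.eqb m k then 0 else nu m * P h m k) else 0)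
                  (D k - nu k * P h k k)).
  { eapply is_ext; [|exact B]. intros m; cbv beta. unfold nu.
    destruct (S m) eqn:Sm; destruct (Nat.eqb m k) eqn:E.
    - apply Nat.eqb_eq in E; subst; ring.
    - ring.
    - apply Nat.eqb_eq in E; subst; congruence.
    - ring. }
  destruct (is_exists_comp (W k) (fun m => (if S m then P s i m * P h m k else 0) + (if S m then P s j m * P h m k else 0))
     (P (s+h) i k + P (s+h) j k)) as [w Hw].
  - intros m; unfold W, nu. destruct (S m) eqn:Sm; [|lra].
    pose proof (Pnn s i m Hs Si Sm). pose proof (Pnn s j m Hs Sj Sm). pose proof (Pnn h m k ltac:(lra) Sm Sk).
    destruct (Nat.eqb m k); [nra|].
    split; [apply Rmult_le_pos; [apply Rabs_pos|lra]|].
    assert (Rabs (P s i m - P s j m) <= P s i m + P s j m) by (apply Rabs_le; lra). nra.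
  - apply is_plus; assumption.
  - exists w; split; auto. apply (is_abs _ _ _ B'). eapply is_ext; [|exact Hw].
    intros m; unfold W. destruct (S m) eqn:Sm; [|rewrite Rabs_R0; auto].
    destruct (Nat.eqb m k); [rewrite Rabs_R0; auto|].
    rewrite Rabs_mult, (Rabs_pos_eq (P h m k)); auto. apply Pnn; auto; lra.
Qed.

Definition wk k := if S k then lim_series (W k) else 0.

Lemma wk_spec k : S k = true -> infinite_sum (W k) (wk k) /\ Rabs (D k - nu k * P h k k) <= wk k.
Proof.
  intros Sk. destruct (step1 k Sk) as [w [Hw Hb]].
  assert (E : wk k = w).
  { unfold wk; rewrite Sk. apply (uniqueness_sum (W k)); [apply lim_series_spec; eauto| exact Hw]. }
  rewrite E; auto.
Qed.

Lemma step3 n : sum_f_R0 wk n <= (N*h/2) * Ff s.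
Proof.
  pose proof (is_finsum (fun k m => if S k then W k m else 0) wk n) as HF.
  assert (HF' : infinite_sum (fun m => sum_f_R0 (fun k => if S k then W k m else 0) n) (sum_f_R0 wk n)).
  { apply HF. intros k _. destruct (S k) eqn:Sk.
    - apply (wk_spec k Sk).
    - unfold wk; rewrite Sk. apply is_zero. }
  clear HF.
  apply (is_le _ _ _ _ ) with (2 := HF') (3 := is_scal _ _ (N*h/2) (Ff_spec s Hs)).
  intros m. unfold absd. destruct (S m) eqn:Sm.
  - assert (E : sum_f_R0 (fun k => if S k then W k m else 0) n =
                Rabs (nu m) * sum_f_R0 (fun k => if S k then (if Nat.eqb k m then 0 else P h m k) else 0) n).
    { rewrite scal_sum. apply sum_eq. intros k _. unfold W. rewrite Sm, Nat.eqb_sym.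
      destruct (S k); [destruct (Nat.eqb k m)|]; ring. }
    rewrite E.
    pose proof (Prow h m ltac:(lra) Sm) as Hr. unfold ssum in Hr.
    pose proof (is_minus _ _ _ _ Hr (is_single m (P h m m))) as Hr'.
    assert (Hb : infinite_sum (fun k => if S k then (if Nat.eqb k m then 0 else P h m k) else 0) (1 - P h m m)).
    { eapply is_ext; [|exact Hr']. intros k; cbv beta.
      destruct (S k) eqn:Sk; destruct (Nat.eqb k m) eqn:E2.
      - apply Nat.eqb_eq in E2; subst; ring.
      - ring.
      - apply Nat.eqb_eq in E2; subst; congruence.
      - ring. }
    assert (Hp : sum_f_R0 (fun k => if S k then (if Nat.eqb k m then 0 else P h m k) else 0) n <= 1 - P h m m).
    { apply (partial_le _ _ n) with (2 := Hb). intros k. destruct (S k) eqn:Sk; [|lra].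
      destruct (Nat.eqb k m); [lra|]. apply Pnn; auto; lra. }
    pose proof (pkk_lower2 m h Sm ltac:(lra)).
    pose proof (Rabs_pos (nu m)). unfold nu in *. nra.
  - assert (E : sum_f_R0 (fun k => if S k then W k m else 0) n = sum_f_R0 (fun _ => 0) n).
    { apply sum_eq. intros k _. unfold W. rewrite Sm. destruct (S k); auto. }
    rewrite E, sum_cte. lra.
Qed.

Lemma step4 n : (1 - N*h/2) * sum_f_R0 (absd s) n - sum_f_R0 wk n <= sum_f_R0 (absd (s+h)) n.
Proof.
  rewrite scal_sum, <- minus_sum. apply sum_Rle. intros k _.
  unfold absd. destruct (S k) eqn:Sk.
  - destruct (wk_spec k Sk) as [_ Hb].
    pose proof (pkk_lower2 k h Sk ltac:(lra)).
    pose proof (Pnn h k k ltac:(lra) Sk Sk).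
    assert (E : Rabs (nu k * P h k k) = Rabs (nu k) * P h k k) by (rewrite Rabs_mult, (Rabs_pos_eq (P h k k)); auto).
    pose proof (Rabs_triang_inv (nu k * P h k k) (D k)).
    rewrite <- Rabs_Ropp in Hb. replace (- (D k - nu k * P h k k)) with (nu k * P h k k - D k) in Hb by ring.
    pose proof (Rabs_pos (nu k)). unfold D, nu in *. nra.
  - unfold wk; rewrite Sk. lra.
Qed.

Lemma core : Ff s * (1 - N * h) <= Ff (s + h).
Proof.
  assert (H5 : forall n, (1 - N*h/2) * sum_f_R0 (absd s) n - (N*h/2) * Ff s <= Ff (s+h)).
  { intros n. pose proof (step3 n). pose proof (step4 n).
    pose proof (partial_le (absd (s+h)) (Ff (s+h)) n (absd_nn (s+h)) (Ff_spec (s+h) ltac:(lra))). lra. }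
  assert (Hc : Un_cv (fun n => (1 - N*h/2) * sum_f_R0 (absd s) n - (N*h/2) * Ff s)
               ((1 - N*h/2) * Ff s - (N*h/2) * Ff s)).
  { apply (CV_minus _ (fun _ => N*h/2 * Ff s)); [|apply cv_const].
    apply (CV_mult (fun _ => 1 - N*h/2)); [apply cv_const| apply (Ff_spec s Hs)]. }
  pose proof (Rle_cv_lim H5 Hc (cv_const (Ff (s+h)))). lra.
Qed.
End Core.

Lemma F_lower t : 0 <= t -> 2 * exp (- N * t) <= Ff t.
Proof.
  destruct (qdiag_le i Si) as [HN0 _].
  apply (disc Ff (fun h => 1 - N*h) 2 N HN0 ltac:(lra)).
  - apply (is_le (fun k => (if Nat.eqb k i then 1 else 0) + (if Nat.eqb k j then 1 else 0)) (absd 0) (1+1)).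
    + intros k. unfold absd. destruct (S k) eqn:Sk.
      * rewrite !P0 by auto. unfold kron.
        destruct (Nat.eqb k i) eqn:E1; destruct (Nat.eqb k j) eqn:E2.
        -- apply Nat.eqb_eq in E1; apply Nat.eqb_eq in E2; subst; congruence.
        -- rewrite (Nat.eqb_sym i k), (Nat.eqb_sym j k), E1, E2. rewrite Rminus_0_r, Rabs_R1. lra.
        -- rewrite (Nat.eqb_sym i k), (Nat.eqb_sym j k), E1, E2. rewrite Rminus_0_l, Rabs_Ropp, Rabs_R1. lra.
        -- pose proof (Rabs_pos (kron i k - kron j k)). unfold kron in H. lra.
      * destruct (Nat.eqb k i) eqn:E1; [apply Nat.eqb_eq in E1; subst; congruence|].
        destruct (Nat.eqb k j) eqn:E2; [apply Nat.eqb_eq in E2; subst; congruence|]. lra.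
    + apply is_plus; apply is_single.
    + apply Ff_spec; lra.
  - intros s h Hs Hh. apply core; auto.
  - intros eps He. exists 1. split; [lra|]. intros h Hh. nra.
Qed.
End Pair.

End Main.


Theorem mainTheorem10 (S : nat -> bool) (P : R -> nat -> nat -> R)
  (Q : nat -> nat -> R) (N : R) :
  transition_function S P ->
  has_Q_matrix S P Q ->
  conservative S Q ->
  (exists B, forall i, S i = true -> qdiag Q i <= B) ->
  is_normQ S Q N ->
  (forall t, 0 <= t ->
     0 < exp (- t * N) /\
     forall i j, S i = true -> S j = true -> i <> j ->
       exists d, tv_rows S P t i j d /\ exp (- t * N) <= d) /\
  initial_state_identifiable S P.
Proof.
  intros HT HQ HC _ HN.
  assert (Main : forall t i j, 0 <= t -> S i = true -> S j = true -> i <> j ->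
     tv_rows S P t i j (Ff S P i j t / 2) /\ exp (- t * N) <= Ff S P i j t / 2).
  { intros t i j Ht Si Sj Hij. split.
    - unfold tv_rows, ssum. replace (2 * (Ff S P i j t / 2)) with (Ff S P i j t) by field.
      apply (Ff_spec S P HT i j Si Sj t Ht).
    - pose proof (F_lower S P Q N HT HQ HC HN i j Si Sj Hij t Ht).
      replace (- t * N) with (- N * t) by ring. lra. }
  split.
  - intros t Ht. split; [apply exp_pos|]. intros i j Si Sj Hij.
    exists (Ff S P i j t / 2). apply Main; auto.
  - intros t i j Ht Si Sj Hij.
    apply NNPP. intros Hn.
    assert (Z : forall k, absd S P i j t k = 0).
    { intros k. unfold absd. destruct (S k) eqn:Sk; [|reflexivity].
      assert (P t i k = P t j k).
      { apply NNPP. intros Hne. apply Hn. exists k. auto. }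
      rewrite H, Rminus_diag, Rabs_R0. reflexivity. }
    assert (E : Ff S P i j t = 0).
    { apply (uniqueness_sum (absd S P i j t)). apply (Ff_spec S P HT i j Si Sj t Ht).
      eapply is_ext; [|apply is_zero]. intros k; rewrite Z; reflexivity. }
    destruct (Main t i j Ht Si Sj Hij) as [_ H2]. pose proof (exp_pos (- t * N)). lra.
Qed.
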